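(* Let $F$ and $H$ be two CNF formulae that do not share variables and are both unsatisfiable. Then the tree obtained from an optimal backtracking search tree of $F$ by replacing every empty subtree with an optimal backtracking search tree of $H$ is an optimal backtracking search tree of the product $F \cdot H = \{\gamma \vee \delta \mid \gamma \in F,\ \delta \in H\}$.
   Context: A CNF formula is a finite set of clauses (disjunctions of literals); the empty clause is unsatisfiable. For a partial truth assignment $I$ (a set of literals), $F|I$ is obtained from $F$ by deleting every clause containing a literal true under $I$ and deleting from the remaining clauses every literal false under $I$. $Var(F)$ is the set of variables of $F$. A binary tree is either the empty tree $()$ or a triple $(x~T_1~T_2)$ with root labelled $x$, left subtree $T_1$, right subtree $T_2$; its size is its number of nodes; the ''empty subtrees'' of a tree are all occurrences of $()$ inside it. A backtracking search tree (BST) of $F$ is: the empty tree if $F$ contains the empty clause; otherwise $(x~T_1~T_2)$ with $x \in Var(F)$, $T_1$ a BST of $F|\{\neg x\}$, $T_2$ a BST of $F|\{x\}$. An optimal BST is one of minimum size. *)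

(* Defs.v *)
From mathcomp Require Import all_boot.
Set Implicit Arguments. Unset Strict Implicit. Unset Printing Implicit Defensive.

(* Variables are natural numbers; a literal is (x, b):
   (x, true) is the positive literal x, (x, false) is ~x. *)
Definition lit := (nat * bool)%type.
Definition neg (l : lit) : lit := (l.1, ~~ l.2).

(* A clause is a finite set of literals, represented by a list (read as the
   set of its elements); a CNF formula is a finite set of clauses,
   represented by a list of clauses (read as the set of its elements). *)
Definition clause := seq lit.
Definition cnf := seq clause.

Definition vars (F : cnf) : seq nat := [seq l.1 | l <- flatten F].

Definition restrict (F : cnf) (I : seq lit) : cnf :=
  [seq [seq l <- C | neg l \notin I] | C <- [seq C <- F | ~~ has (fun l => l \in I) C]].

Definition lit_true (a : nat -> bool) (l : lit) : bool := a l.1 == l.2.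
Definition satisfiable (F : cnf) : Prop :=
  exists a : nat -> bool, all (fun C => has (lit_true a) C) F.

Inductive tree := Leaf | Node of nat & tree & tree.

Fixpoint tsize (T : tree) : nat :=
  match T with Leaf => 0 | Node _ T1 T2 => (tsize T1 + tsize T2).+1 end.

Fixpoint is_bst (F : cnf) (T : tree) : bool :=
  match T with
  | Leaf => [::] \in F
  | Node x T1 T2 =>
      [&& [::] \notin F, x \in vars F,
          is_bst (restrict F [:: neg (x, true)]) T1
        & is_bst (restrict F [:: (x, true)]) T2]
  end.

Definition optimal_bst (F : cnf) (T : tree) : Prop :=
  is_bst F T /\ forall T', is_bst F T' -> tsize T <= tsize T'.

Fixpoint graft (T S : tree) : tree :=
  match T with Leaf => S | Node x T1 T2 => Node x (graft T1 S) (graft T2 S) end.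

Definition cnf_prod (F H : cnf) : cnf := [seq g ++ d | g <- F, d <- H].

(* Main.v *)
Require Import Defs.
From mathcomp Require Import all_boot zify.
Set Implicit Arguments. Unset Strict Implicit.

Lemma varsE F x : x \in vars F -> exists C l, [/\ C \in F, l \in C & l.1 = x].
Proof.
rewrite /vars => /mapP [l /flattenP [C HC Hl] ->]; by exists C, l.
Qed.

Lemma varsI (F : cnf) (C : clause) (l : lit) : C \in F -> l \in C -> l.1 \in vars F.
Proof. move=> HC Hl; rewrite /vars; apply: map_f; apply/flattenP; by exists C. Qed.

Lemma vars_restrict F I x : x \in vars (restrict F I) -> x \in vars F.
Proof.
move/varsE=> [C' [l [/mapP [C HC ->] Hl <-]]].
move: HC; rewrite mem_filter => /andP [_ HC].
move: Hl; rewrite mem_filter => /andP [_ Hl].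
exact: varsI HC Hl.
Qed.

Lemma nil_prod F H : ([::] \in cnf_prod F H) = ([::] \in F) && ([::] \in H).
Proof.
apply/idP/idP.
- move/allpairsP=> [[g d] /= [Hg Hd]]; case: g Hg => // Hg; case: d Hd => // Hd _.
  by rewrite Hg Hd.
- move=> /andP [Hg Hd]. exact: (allpairs_f (fun g d : clause => g ++ d) Hg Hd).
Qed.

Definition clean (F : cnf) (x : nat) := forall C l, C \in F -> l \in C -> l.1 != x.

Lemma cleanV F x : x \notin vars F -> clean F x.
Proof. move=> Hx C l HC Hl; apply/eqP=> E; move: (varsI HC Hl); rewrite E; by apply/negP. Qed.

Lemma clean_cl (C : clause) l : (forall l', l' \in C -> l'.1 != l.1) ->
  ~~ has (fun l' => l' \in [:: l]) C /\ [seq l' <- C | neg l' \notin [:: l]] = C.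
Proof.
move=> Hc; split.
- apply/hasP=> [[l' Hl']]; rewrite inE => /eqP E; subst; move: (Hc _ Hl'); by rewrite eqxx.
- apply/all_filterP/allP=> l' Hl'; rewrite inE; apply/eqP=> E.
  move: (Hc _ Hl'); by rewrite -E eqxx.
Qed.

Lemma restrict_cat A B I : restrict (A ++ B) I = restrict A I ++ restrict B I.
Proof. by rewrite /restrict filter_cat map_cat. Qed.

Lemma prod_cons g F H : cnf_prod (g :: F) H = [seq g ++ d | d <- H] ++ cnf_prod F H.
Proof. by rewrite /cnf_prod allpairs_cons. Qed.

Lemma restrict_cons C F I : restrict (C :: F) I =
  if has (fun l => l \in I) C then restrict F I
  else [seq l <- C | neg l \notin I] :: restrict F I.
Proof. rewrite /restrict /=; by case: (has _ C). Qed.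

Lemma restrict_nov H l : clean H l.1 -> restrict H [:: l] = H.
Proof.
elim: H => // C H IH Hc; rewrite restrict_cons.
have [h1 h2] := clean_cl (fun l' Hl' => Hc C l' (mem_head _ _) Hl').
rewrite (negbTE h1) h2 IH // => C' l' HC' Hl'; apply: (Hc C' l') => //.
by rewrite inE HC' orbT.
Qed.

Lemma clean_cons C H x : clean (C :: H) x -> clean H x.
Proof. move=> Hc C' l HC; apply: Hc; by rewrite inE HC orbT. Qed.

Lemma restrict_mapL g H l : clean H l.1 ->
  restrict [seq g ++ d | d <- H] [:: l] =
  if has (fun l' => l' \in [:: l]) g then [::]
  else [seq [seq l' <- g | neg l' \notin [:: l]] ++ d | d <- H].
Proof.
elim: H => [|d H IH] Hc /=; first by case: ifP.
rewrite restrict_cons IH; last exact: clean_cons Hc.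
have [h1 h2] := clean_cl (fun l' Hl' => Hc d l' (mem_head _ _) Hl').
rewrite has_cat (negbTE h1) orbF filter_cat h2.
by case: ifP => E; rewrite E.
Qed.

Lemma restrict_prodL F H l : clean H l.1 ->
  restrict (cnf_prod F H) [:: l] = cnf_prod (restrict F [:: l]) H.
Proof.
move=> Hc; elim: F => [|g F IH]; first by rewrite /cnf_prod.
rewrite prod_cons restrict_cat IH restrict_mapL // restrict_cons.
by case: ifP => _ //; rewrite prod_cons.
Qed.

Lemma restrict_mapR g H l : (forall l', l' \in g -> l'.1 != l.1) ->
  restrict [seq g ++ d | d <- H] [:: l] = [seq g ++ d | d <- restrict H [:: l]].
Proof.
move=> Hg; have [h1 h2] := clean_cl Hg.
elim: H => [|d H IH] //=.
rewrite !restrict_cons IH has_cat (negbTE h1) /= filter_cat h2.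
by case: ifP.
Qed.

Lemma restrict_prodR F H l : clean F l.1 ->
  restrict (cnf_prod F H) [:: l] = cnf_prod F (restrict H [:: l]).
Proof.
elim: F => [|g F IH] Hc; first by rewrite /cnf_prod.
rewrite !prod_cons restrict_cat IH; last exact: clean_cons Hc.
rewrite restrict_mapR // => l' Hl'; apply: (Hc g) => //; exact: mem_head.
Qed.

Lemma arithL a1 a2 b1 b2 t1 t2 : a1.+1*b1.+1 <= t1.+1 -> a2.+1*b2.+1 <= t2.+1 -> b1 <= b2 -> (a1+a2).+2 * b1.+1 <= (t1+t2).+2.
Proof.
move=> h1 h2 h; have h3 : a2.+1*b1.+1 <= t2.+1.
  by apply: leq_trans h2; rewrite leq_mul2l ltnS h orbT.
have ->: (t1+t2).+2 = t1.+1 + t2.+1 by rewrite addSn addnS.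
rewrite -addSn -addnS mulnDl; exact: leq_add.
Qed.
Lemma arithR a1 a2 b1 b2 t1 t2 : a1.+1*b1.+1 <= t1.+1 -> a2.+1*b2.+1 <= t2.+1 -> b2 <= b1 -> (a1+a2).+2 * b2.+1 <= (t1+t2).+2.
Proof. move=> h1 h2 h; rewrite addnC [t1 + t2]addnC; exact: arithL h2 h1 h. Qed.

Definition subsumes (G H : cnf) := forall C, C \in G -> exists2 D, D \in H & {subset D <= C}.

Lemma subsumes_restrict G H I : subsumes G H -> subsumes (restrict G I) (restrict H I).
Proof.
move=> Hs C' /mapP [C]; rewrite mem_filter => /andP [hC HC] ->.
have [D HD sDC] := Hs C HC.
exists [seq l <- D | neg l \notin I].
- apply/mapP; exists D => //; rewrite mem_filter HD andbT.
  apply: contra hC => /hasP [l Hl Il]; apply/hasP; exists l => //; exact: sDC.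
- move=> l; rewrite !mem_filter => /andP [-> /sDC ->] //.
Qed.

Lemma sub_bst T : forall G H, is_bst G T -> subsumes G H ->
  exists B : tree, is_bst H B /\ Defs.tsize B <= Defs.tsize T.
Proof.
elim: T => [|x T1 IH1 T2 IH2] G H /=.
- move=> HG Hs; have [D HD sD] := Hs _ HG; exists Leaf; split => //=.
  case: D HD sD => // a D _ sD; by move: (sD a (mem_head _ _)).
- move=> /and4P [n0 xv b1 b2] Hs.
  case E: ([::] \in H); first by exists Leaf.
  have [B1 [hB1 sB1]] := IH1 _ _ b1 (subsumes_restrict Hs).
  have [B2 [hB2 sB2]] := IH2 _ _ b2 (subsumes_restrict Hs).
  case xH: (x \in vars H).
  + exists (Node x B1 B2); split => /=; last by lia.
    by rewrite E xH hB1 hB2.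
  + exists B1; split; last by lia.
    rewrite restrict_nov in hB1 => //; apply: cleanV; by rewrite xH.
Qed.

Definition disj (F H : cnf) := forall x, x \in vars F -> x \notin vars H.

Lemma disj_sym F H : disj F H -> disj H F.
Proof. move=> D x xH; apply/negP => xF; move: (D x xF); by rewrite xH. Qed.

Lemma disj_rL F H I : disj F H -> disj (restrict F I) H.
Proof. move=> D x /vars_restrict; exact: D. Qed.

Lemma disj_rR F H I : disj F H -> disj F (restrict H I).
Proof. move=> D x /D; apply: contra; exact: vars_restrict. Qed.

Lemma lower T : forall F H, is_bst (cnf_prod F H) T -> disj F H ->
  exists (A B : tree), [/\ is_bst F A, is_bst H B & (Defs.tsize A).+1 * (Defs.tsize B).+1 <= (Defs.tsize T).+1].
Proof.
elim: T => [|x T1 IH1 T2 IH2] F H.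
- rewrite /= nil_prod => /andP [h1 h2] _; by exists Leaf, Leaf.
- move=> hb D; move: (hb) => /= /and4P [n0 xv b1 b2].
  have [C [l [/allpairsP [[g d] /= [Hg Hd ->]] Hl Ex]]] := varsE xv.
  rewrite mem_cat in Hl; case/orP: Hl => Hl.
  + have xF : x \in vars F by rewrite -Ex; exact: varsI Hg Hl.
    have cH : forall b : bool, clean H (x, b).1 by move=> b; exact: (cleanV (D x xF)).
    case E: ([::] \in F).
    * have Hs : subsumes (cnf_prod F H) H.
        move=> C' /allpairsP [[g' d'] /= [_ Hd' ->]]; exists d' => // z.
        by rewrite mem_cat orbC => ->.
      have [B [hB sB]] := sub_bst hb Hs.
      exists Leaf, B; move: sB => /= sB; split => //=; lia.
    * rewrite restrict_prodL in b1; last exact: cH.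
      rewrite restrict_prodL in b2; last exact: cH.
      have [A1 [B1 [hA1 hB1 s1]]] := IH1 _ _ b1 (@disj_rL _ _ _ D).
      have [A2 [B2 [hA2 hB2 s2]]] := IH2 _ _ b2 (@disj_rL _ _ _ D).
      exists (Node x A1 A2).
      case: (leqP (Defs.tsize B1) (Defs.tsize B2)) => hle.
      -- exists B1; split => //=; [by rewrite E xF hA1 hA2| exact: arithL s1 s2 hle].
      -- exists B2; split => //=; [by rewrite E xF hA1 hA2| exact: arithR s1 s2 (ltnW hle)].
  + have xH : x \in vars H by rewrite -Ex; exact: varsI Hd Hl.
    have cF : forall b : bool, clean F (x, b).1 by move=> b /=; apply: cleanV; exact: (disj_sym D).
    case E: ([::] \in H).
    * have Hs : subsumes (cnf_prod F H) F.
        move=> C' /allpairsP [[g' d'] /= [Hg' _ ->]]; exists g' => // z.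
        by rewrite mem_cat => ->.
      have [A [hA sA]] := sub_bst hb Hs.
      exists A, Leaf; move: sA => /= sA; split => //=; lia.
    * rewrite restrict_prodR in b1; last exact: cF.
      rewrite restrict_prodR in b2; last exact: cF.
      have [A1 [B1 [hA1 hB1 s1]]] := IH1 _ _ b1 (@disj_rR _ _ _ D).
      have [A2 [B2 [hA2 hB2 s2]]] := IH2 _ _ b2 (@disj_rR _ _ _ D).
      case: (leqP (Defs.tsize A1) (Defs.tsize A2)) => hle.
      -- exists A1, (Node x B1 B2); rewrite mulnC in s1; rewrite mulnC in s2.
         split => //=; [by rewrite E xH hB1 hB2| rewrite mulnC; exact: arithL s1 s2 hle].
      -- exists A2, (Node x B1 B2); rewrite mulnC in s1; rewrite mulnC in s2.
         split => //=; [by rewrite E xH hB1 hB2| rewrite mulnC; exact: arithR s1 s2 (ltnW hle)].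
Qed.

Lemma graft_size T S : (Defs.tsize (graft T S)).+1 = (Defs.tsize T).+1 * (Defs.tsize S).+1.
Proof.
elim: T => [|x T1 IH1 T2 IH2] /=; first by rewrite mul1n.
have ->: (Defs.tsize (graft T1 S) + Defs.tsize (graft T2 S)).+2 =
  (Defs.tsize (graft T1 S)).+1 + (Defs.tsize (graft T2 S)).+1 by rewrite addSn addnS.
rewrite IH1 IH2 -mulnDl; by rewrite addSn addnS.
Qed.

Lemma bst_nonempty H T : is_bst H T -> exists d, d \in H.
Proof.
case: T => [|x T1 T2] /=; first by exists [::].
move=> /and4P [_ /varsE [C [l [HC _ _]]] _ _]; by exists C.
Qed.

Lemma graft_leaf T : forall F H, [::] \in F -> disj F H -> is_bst H T -> is_bst (cnf_prod F H) T.
Proof.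
elim: T => [|x T1 IH1 T2 IH2] F H F0 D /=.
- move=> H0; by rewrite nil_prod F0 H0.
- move=> /and4P [n0 xv b1 b2].
  have xF : x \notin vars F by apply/negP => /D; rewrite xv.
  have cF : forall b : bool, clean F (x, b).1 by move=> b; exact: (cleanV xF).
  rewrite nil_prod (negbTE n0) andbF /=.
  have [C [l [HC Hl Ex]]] := varsE xv.
  rewrite restrict_prodR ?restrict_prodR; try exact: cF.
  rewrite (IH1 _ _ F0 (@disj_rR _ _ _ D) b1) (IH2 _ _ F0 (@disj_rR _ _ _ D) b2) andbT andbT.
  rewrite -Ex; apply: (@varsI _ ([::] ++ C)); last by [].
  exact: (allpairs_f (fun g d : clause => g ++ d) F0 HC).
Qed.

Lemma graft_bst TF : forall F H TH, disj F H -> is_bst F TF -> is_bst H TH ->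
  is_bst (cnf_prod F H) (graft TF TH).
Proof.
elim: TF => [|x T1 IH1 T2 IH2] F H TH D /=.
- move=> F0 hH; exact: graft_leaf.
- move=> /and4P [n0 xv b1 b2] hH.
  have xH : x \notin vars H by apply: D.
  have cH : forall b : bool, clean H (x, b).1 by move=> b; exact: (cleanV xH).
  rewrite nil_prod (negbTE n0) /=.
  rewrite restrict_prodL ?restrict_prodL; try exact: cH.
  rewrite (IH1 _ _ _ (@disj_rL _ _ _ D) b1 hH) (IH2 _ _ _ (@disj_rL _ _ _ D) b2 hH) andbT andbT.
  have [d Hd] := bst_nonempty hH.
  have [C [l [HC Hl Ex]]] := varsE xv.
  rewrite -Ex; apply: (@varsI _ (C ++ d)); last by rewrite mem_cat Hl.
  exact: (allpairs_f (fun g d : clause => g ++ d) HC Hd).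
Qed.

Theorem lemma5 (F H : cnf) (TF TH : tree) :
  (forall x, x \in vars F -> x \notin vars H) ->
  ~ satisfiable F -> ~ satisfiable H ->
  optimal_bst F TF -> optimal_bst H TH ->
  optimal_bst (cnf_prod F H) (graft TF TH).
Proof.
move=> D _ _ [hF oF] [hH oH]; split; first exact: graft_bst.
move=> T' hT'.
have [A [B [hA hB s]]] := lower hT' D.
rewrite -ltnS graft_size; apply: leq_trans s.
apply: leq_mul; rewrite ltnS; [exact: oF | exact: oH].
Qed.
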